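(* Let $G=(V,E)$ be a connected graph with root $r\in V$, vertex probabilities $p_v\in[0,1]$ with $p_r=0$ and $\sum_{v\in V}p_v=1$, and edge lengths $\lambda_e>0$, and let $n=|V\setminus\{r\}|$. Let $\varepsilon>0$ and let $T^{\mathrm{s}}$ be the tree returned by the parametric search (described in the context) run with parameter $\varepsilon$. Then $$\rho^\star\le (1+\varepsilon)\Bigl(2-\tfrac1n\Bigr)\,\rho(T^{\mathrm{s}}),$$ where $\rho^\star=\max_{T\in\mathcal T(G)}\rho(T)$ is the maximum density.
   Context: Notation: for $V'\subseteq V$, $p(V')=\sum_{v\in V'}p_v$; for $E'\subseteq E$, $\lambda(E')=\sum_{e\in E'}\lambda_e$. $\mathcal T(G)$ is the set of subtrees of $G$ containing the root $r$; for $T\in\mathcal T(G)$, $p(T)=p(V[T])$ and $\lambda(T)=\lambda(E[T])$, and for $\lambda(T)>0$ the (search) density is $\rho(T)=p(T)/\lambda(T)$. The maximum density subtree problem asks for $T\in\mathcal T(G)$ maximizing $\rho(T)$. Prize-collecting Steiner tree (PCST) problem: given $G$, root $r$, edge lengths $(\ell_e)$ and vertex penalties $(p_v)$, find $T\in\mathcal T(G)$ minimizing $\ell(T)+p(V\setminus V[T])$. The GW algorithm is the Goemans–Williamson primal-dual algorithm for PCST; it returns a tree $T\in\mathcal T(G)$ satisfying $\ell(T)+(2-\frac1n)p(V\setminus V[T])\le(2-\frac1n)(\ell(T')+p(V\setminus V[T']))$ for every $T'\in\mathcal T(G)$. Parametric search with parameter $\varepsilon>0$: (1) take an arbitrary $T^{\mathrm{s}}\in\mathcal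 T(G)$ (with $\lambda(T^{\mathrm s})>0$), set $\alpha\gets(2-\frac1n)p(T^{\mathrm{s}})/\lambda(T^{\mathrm{s}})$ and $\beta\gets\max\{p_v/\lambda_{\{v,w\}}:\{v,w\}\in E\}$; (2) while $\beta>(1+\varepsilon)\alpha$: set $\rho\gets(\alpha+\beta)/2$; let $T$ be the tree returned by the GW algorithm on $G$ with edge lengths $(\rho\lambda_e)_{e\in E}$ and penalties $(p_v)_{v\in V}$; if $(2-\frac1n)p(T)\le\rho\lambda(T)$ set $\beta\gets\rho$, otherwise set $\alpha\gets(2-\frac1n)\rho(T)$ and $T^{\mathrm{s}}\gets T$; (3) return $T^{\mathrm{s}}$. *)

(* Defs.v *)
From mathcomp Require Import all_boot all_order all_algebra.
Set Implicit Arguments. Unset Strict Implicit. Unset Printing Implicit Defensive.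
Import Order.TTheory GRing.Theory Num.Theory.
Local Open Scope ring_scope.

Section Graph.
Variables (R : realFieldType) (V : finType).

Definition edge_rel (F : {set {set V}}) : rel V := fun x y => [set x; y] \in F.

Definition is_graph (E : {set {set V}}) : Prop :=
  forall e, e \in E -> #|e| = 2%N.

Definition connected_graph (E : {set {set V}}) : Prop :=
  forall u v : V, connect (edge_rel E) u v.

Definition is_rooted_subtree (E : {set {set V}}) (r : V)
    (S : {set V}) (F : {set {set V}}) : Prop :=
  [/\ F \subset E, r \in S,
      (forall e, e \in F -> e \subset S),
      (forall v, v \in S -> connect (edge_rel F) r v)
    & #|F| = (#|S| - 1)%N].

Definition pmass (p : V -> R) (S : {set V}) : R := \sum_(v in S) p v.
Definition lmass (lam : {set V} -> R) (F : {set {set V}}) : R :=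
  \sum_(e in F) lam e.
Definition density (p : V -> R) (lam : {set V} -> R)
    (S : {set V}) (F : {set {set V}}) : R :=
  pmass p S / lmass lam F.

Definition nverts (r : V) : nat := #|[set v | v != r]|.
Definition gwfac (r : V) : R := 2 - (nverts r)%:R^-1.

(* Guarantee of the GW algorithm on lengths (ell e) and penalties p:
   ell(T) + (2-1/n) p(V\V[T]) <= (2-1/n) (ell(T') + p(V\V[T'])) for all T'. *)
Definition gw_output (E : {set {set V}}) (r : V) (ell : {set V} -> R)
    (p : V -> R) (S : {set V}) (F : {set {set V}}) : Prop :=
  is_rooted_subtree E r S F /\
  forall S' F', is_rooted_subtree E r S' F' ->
    lmass ell F + gwfac r * pmass p (~: S)
      <= gwfac r * (lmass ell F' + pmass p (~: S')).

Definition beta0 (E : {set {set V}}) (p : V -> R) (lam : {set V} -> R) : R :=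
  \big[Num.max/0]_(e in E) \big[Num.max/0]_(v in e) (p v / lam e).

(* Execution of the while loop of the parametric search.
   search_run E r p lam eps a b S F S' F' means: starting the loop in the state
   (alpha = a, beta = b, T^s = (S,F)), the loop can terminate with T^s = (S',F'),
   where each call to GW returns some tree satisfying the GW guarantee. *)
Inductive search_run (E : {set {set V}}) (r : V) (p : V -> R)
    (lam : {set V} -> R) (eps : R)
  : R -> R -> {set V} -> {set {set V}} -> {set V} -> {set {set V}} -> Prop :=
| search_stop a b S F :
    ~ (b > (1 + eps) * a) -> search_run E r p lam eps a b S F S F
| search_beta a b S F S1 F1 Sout Fout :
    b > (1 + eps) * a ->
    gw_output E r (fun e => (a + b) / 2 * lam e) p S1 F1 ->
    gwfac r * pmass p S1 <= (a + b) / 2 * lmass lam F1 ->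
    search_run E r p lam eps a ((a + b) / 2) S F Sout Fout ->
    search_run E r p lam eps a b S F Sout Fout
| search_alpha a b S F S1 F1 Sout Fout :
    b > (1 + eps) * a ->
    gw_output E r (fun e => (a + b) / 2 * lam e) p S1 F1 ->
    ~ (gwfac r * pmass p S1 <= (a + b) / 2 * lmass lam F1) ->
    search_run E r p lam eps (gwfac r * density p lam S1 F1) b S1 F1 Sout Fout ->
    search_run E r p lam eps a b S F Sout Fout.

Definition parametric_search_output (E : {set {set V}}) (r : V) (p : V -> R)
    (lam : {set V} -> R) (eps : R) (Ss : {set V}) (Fs : {set {set V}}) : Prop :=
  exists S0 F0, [/\ is_rooted_subtree E r S0 F0, 0 < lmass lam F0 &
    search_run E r p lam eps (gwfac r * density p lam S0 F0) (beta0 E p lam)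
      S0 F0 Ss Fs].

End Graph.

(* Main.v *)
Require Import Defs.
From mathcomp Require Import all_boot all_order all_algebra.
From mathcomp Require Import ring lra.
Import Order.TTheory GRing.Theory Num.Theory.
Set Implicit Arguments. Unset Strict Implicit.
Local Open Scope ring_scope.
Section Dist.
Variables (V : finType) (r : V) (F : {set {set V}}).

Definition Pk (k : nat) (v : V) : bool :=
  [exists t : k.-tuple V, path (edge_rel F) r t && (last r t == v)].

Definition Pd (v : V) (k : nat) : bool := Pk k v || ~~ connect (edge_rel F) r v.

Lemma Pd_ex v : exists k, Pd v k.
Proof.
case C: (connect (edge_rel F) r v); last by exists 0%N; rewrite /Pd C orbT.
move/connectP: C => [s ps lv]; exists (size s); rewrite /Pd; apply/orP; left.
by apply/existsP; exists (in_tuple s) => /=; rewrite ps lv eqxx.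
Qed.

Definition dist v := ex_minn (Pd_ex v).

Lemma dist_min u k : Pk k u -> (dist u <= k)%N.
Proof.
rewrite /dist; case: ex_minnP => m _ H Pk'; apply: H; by rewrite /Pd Pk'.
Qed.

Lemma parent_ex v : connect (edge_rel F) r v -> v != r ->
  exists u, ([set u; v] \in F) && (dist u < dist v)%N.
Proof.
move=> C vr.
have : Pd v (dist v) by rewrite /dist; case: ex_minnP.
rewrite /Pd C orbF => /existsP [t /andP [pt /eqP lt]].
move: pt lt; case: t => s /= /eqP sz.
case/lastP: s sz => [|s' x] sz.
  by move=> _ /= E; rewrite E eqxx in vr.
rewrite rcons_path last_rcons => /andP [ps' ex] xv.
subst x.
exists (last r s'); apply/andP; split; first exact: ex.
have : Pk (size s') (last r s').
  by apply/existsP; exists (in_tuple s') => /=; rewrite ps' eqxx.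
move/dist_min => H; apply: leq_ltn_trans H _.
by rewrite -sz size_rcons.
Qed.

End Dist.
Lemma beta0_ge0 (R : realFieldType) (V : finType) E (p : V -> R) lam :
  0 <= beta0 E p lam.
Proof. exact: bigmax_ge_id. Qed.

Lemma beta0_bound (R : realFieldType) (V : finType) (E : {set {set V}}) r
  (p : V -> R) lam :
  p r = 0 -> (forall e, e \in E -> 0 < lam e) ->
  forall S F, is_rooted_subtree E r S F ->
  pmass p S <= beta0 E p lam * lmass lam F.
Proof.
move=> pr0 lampos S F [FE rS FS Sc _].
pose par v := odflt v [pick u | ([set u; v] \in F) && (dist r F u < dist r F v)%N].
have parP : forall v, v \in S :\ r ->
   ([set par v; v] \in F) && (dist r F (par v) < dist r F v)%N.
  move=> v; rewrite in_setD1 => /andP [vr vS].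
  rewrite /par; case: pickP => [u -> //|none].
  have [u Hu] := parent_ex (Sc v vS) vr.
  by rewrite none in Hu.
pose f v := [set par v; v].
have finj : {in S :\ r &, injective f}.
  move=> v w vS wS efw.
  apply/eqP; apply/negPn/negP => vw.
  have := parP v vS; have := parP w wS.
  rewrite /f in efw.
  have : v \in [set par w; w] by rewrite -efw !inE eqxx orbT.
  rewrite !inE => /orP [/eqP vpw|/eqP E']; last by rewrite E' eqxx in vw.
  have : w \in [set par v; v] by rewrite efw !inE eqxx orbT.
  rewrite !inE => /orP [/eqP wpv|/eqP E']; last by rewrite E' eqxx in vw.
  rewrite -vpw -wpv => /andP [_ h1] /andP [_ h2].
  by have := ltn_trans h1 h2; rewrite ltnn.
have fF : f @: (S :\ r) \subset F.
  by apply/subsetP => e /imsetP [v vS ->]; case/andP: (parP v vS).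
rewrite /pmass (big_setD1 r rS) /= pr0 add0r.
apply: (@le_trans _ _ (\sum_(v in S :\ r) beta0 E p lam * lam (f v))).
  apply: ler_sum => v vS.
  have /andP [fvF _] := parP v vS.
  have fvE : f v \in E by apply: (subsetP FE).
  have lp := lampos _ fvE.
  rewrite -ler_pdivrMr //.
  apply: le_trans (le_bigmax_cond _ _ fvE).
  apply: (@le_bigmax_cond _ _ _ 0 v (fun w => w \in f v) (fun w => p w / lam (f v))).
  by rewrite !inE eqxx orbT.
rewrite -mulr_sumr; apply: ler_wpM2l; first exact: beta0_ge0.
rewrite -(big_imset (fun e => lam e) finj) /lmass.
rewrite [X in _ <= X](big_setID (f @: (S :\ r))) /= (setIidPr fF) lerDl.
apply: sumr_ge0 => e; rewrite inE => /andP [_ eF].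
exact/ltW/lampos/(subsetP FE).
Qed.
Lemma gwfac_gt0 (R : realFieldType) (V : finType) (r : V) : 0 < @gwfac R V r.
Proof.
rewrite /gwfac; set n := nverts r.
have : n%:R^-1 <= 1 :> R.
  case: n => [|k]; first by rewrite invr0 ler01.
  by rewrite invf_le1 ?ltr0Sn // ler1n.
move=> h; lra.
Qed.

Lemma pmass_compl (R : realFieldType) (V : finType) (p : V -> R) S :
  pmass p S + pmass p (~: S) = \sum_v p v.
Proof.
rewrite /pmass (bigID (fun v => v \in S) predT) /=.
congr (_ + _); apply: eq_bigl => v; by rewrite ?inE.
Qed.

Definition Inv (R : realFieldType) (V : finType) E r (p : V -> R) lam (b : R) :=
  forall S F, is_rooted_subtree E r S F -> 0 < lmass lam F ->
  density p lam S F <= b.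

Lemma run_ok (R : realFieldType) (V : finType) (E : {set {set V}}) r
  (p : V -> R) lam eps a b S F Sout Fout :
  0 < eps ->
  search_run E r p lam eps a b S F Sout Fout ->
  a = @gwfac R V r * density p lam S F -> Inv E r p lam b ->
  Inv E r p lam ((1 + eps) * @gwfac R V r * density p lam Sout Fout).
Proof.
move=> epos; elim => {a b S F Sout Fout}.
- move=> a b S F nb ea Ib S1 F1 H1 H2; rewrite ea in nb.
  apply: le_trans (Ib _ _ H1 H2) _.
  by rewrite -mulrA leNgt; apply/negP.
- move=> a b S F S1 F1 Sout Fout _ [_ gw] hle _ IH ea Ib.
  apply: IH => // S' F' H1 H2.
  have g0 := @gwfac_gt0 R V r.
  have := gw S' F' H1; rewrite /lmass -!mulr_sumr -/(lmass lam F1) -/(lmass lam F').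
  have e1 := pmass_compl p S1; have e2 := pmass_compl p S'.
  move=> h.
  rewrite /density ler_pdivrMr //.
  have : @gwfac R V r * pmass p S' <= @gwfac R V r * ((a + b) / 2 * lmass lam F').
    set g := @gwfac R V r in g0 h hle *.
    set P1 := pmass p S1 in e1 hle *.
    set Q1 := pmass p (~: S1) in e1 h.
    set P2 := pmass p S' in e2 *.
    set Q2 := pmass p (~: S') in e2 h.
    set L := (a + b) / 2 * lmass lam F1 in h hle.
    rewrite -e2 in e1.
    have e1' : g * P1 + g * Q1 = g * P2 + g * Q2 by rewrite -!mulrDr e1.
    rewrite mulrDr in h.
    move: e1' h hle; generalize (g * P1) (g * Q1) (g * P2) (g * Q2) (g * ((a + b) / 2 * lmass lam F')) L.
    move=> x1 x2 x3 x4 x5 x6; lra.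
  by rewrite ler_pM2l.
- move=> a b S F S1 F1 Sout Fout _ _ _ _ IH _ Ib.
  exact: IH.
Qed.
Theorem proposition1 (R : realFieldType) (V : finType) (E : {set {set V}})
    (r : V) (p : V -> R) (lam : {set V} -> R) (eps : R) :
  is_graph E ->
  connected_graph E ->
  (forall v, 0 <= p v <= 1) ->
  p r = 0 ->
  \sum_(v : V) p v = 1 ->
  (forall e, e \in E -> 0 < lam e) ->
  0 < eps ->
  forall (Ss : {set V}) (Fs : {set {set V}}),
    parametric_search_output E r p lam eps Ss Fs ->
    forall (S : {set V}) (F : {set {set V}}),
      is_rooted_subtree E r S F -> 0 < lmass lam F ->
      density p lam S F <= (1 + eps) * @gwfac R V r * density p lam Ss Fs.
Proof.
move=> _ _ _ pr0 _ lampos epos Ss Fs [S0 [F0 [H0 l0 run]]] S F HS lF.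
have Ib : Inv E r p lam (beta0 E p lam).
  move=> S' F' H1 H2; rewrite /density ler_pdivrMr //.
  exact: (@beta0_bound R V E r p lam pr0 lampos S' F' H1).
have H := run_ok epos run erefl Ib; exact: (H S F HS lF).
Qed.
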